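(* Let $P$ be a $d$-dimensional convex polytope and let $O$ be an acyclic orientation of its graph $G_P$. Then $$f^O \;\geq\; \sum_{v \in V_P} \bigl|\{F \text{ a nonempty face of } P : v \text{ is a sink of } G_F \text{ with respect to } O\}\bigr| \;\geq\; \sum_{i=0}^d f_i(P),$$ where $f_i(P)$ is the number of $i$-dimensional faces of $P$.
   Context: The graph $G_P=(V_P,E_P)$ of a polytope $P$ has vertex set the vertices of $P$, with $v_i,v_j$ adjacent iff some $1$-dimensional face of $P$ contains both. For a face $F$, $G_F$ is the graph of $F$ (a subgraph of $G_P$), oriented by restricting $O$. For an orientation $O$ of a graph $G=(V,E)$, $f^O:=\sum_{v\in V}2^{\operatorname{indeg}(v)}$, where $\operatorname{indeg}$ is the in-degree with respect to $O$. A sink of a graph with respect to an orientation is a vertex all of whose incident edges are oriented towards it. *)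

(* Defs.v *)
From HB Require Import structures.
From mathcomp Require Import all_boot all_order all_algebra.
From mathcomp Require Import boolp.
Set Implicit Arguments. Unset Strict Implicit. Unset Printing Implicit Defensive.
Import Order.TTheory GRing.Theory Num.Theory.

Local Open Scope ring_scope.

(* A polytope P = conv { p t | t : T } in R^n, where T is a finite index type
   of its vertices (p injective, every p t a vertex).  A face of P is
   determined by its vertex set; U : {set T} is the vertex set of a face iff
   U = { t | c . p t = b } for some valid inequality c . x <= b of P
   (c = 0, b = 0 gives P itself; c = 0, b = 1 the empty face). *)

Section Polytope.
Variables (R : realFieldType) (n : nat) (T : finType) (p : T -> 'rV[R]_n).

Definition dotp (c x : 'rV[R]_n) : R := \sum_(i < n) c 0 i * x 0 i.

Definition is_face (U : {set T}) : Prop :=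
  exists (c : 'rV[R]_n) (b : R),
    (forall t, dotp c (p t) <= b) /\ (forall t, (t \in U) = (dotp c (p t) == b)).

Definition is_faceb (U : {set T}) : bool := `[< is_face U >].

(* rank of the homogenized vertex vectors (p t, 1), t in U;
   the affine dimension of the face with vertex set U is hrank U - 1. *)
Definition hrank (U : {set T}) : nat :=
  \rank (\matrix_(i < #|T|)
           (if enum_val i \in U then row_mx (p (enum_val i)) (const_mx 1 : 'rV[R]_1)
            else 0)).

Definition face_dim (U : {set T}) : nat := (hrank U).-1.

Definition adj (u v : T) : bool :=
  (u != v) && `[< exists U : {set T}, [/\ is_face U, face_dim U = 1%N, u \in U & v \in U] >].

Definition f_num (i : nat) : nat :=
  #|[set U : {set T} | [&& is_faceb U, U != set0 & face_dim U == i]]|.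

End Polytope.

Section Orientation.
Variables (R : realFieldType) (n : nat) (T : finType) (p : T -> 'rV[R]_n).

(* o u v means the edge {u,v} is oriented from u to v *)
Definition orientation (o : rel T) : Prop :=
  (forall u v, o u v -> adj p u v) /\ (forall u v, adj p u v -> o u v (+) o v u).

Definition acyclic_or (o : rel T) : Prop := forall u v, o u v -> ~~ connect o v u.

Definition indeg (o : rel T) (v : T) : nat := #|[set u | o u v]|.

Definition fO (o : rel T) : nat := (\sum_(v : T) 2 ^ indeg o v)%N.

(* v is a sink of G_F (F the face with vertex set U): v is a vertex of F and
   every edge of G_F (edge of G_P with both ends in F) at v points to v *)
Definition sinkb (o : rel T) (U : {set T}) (v : T) : bool :=
  (v \in U) && [forall u, ((u \in U) && adj p u v) ==> o u v].

Definition sink_count (o : rel T) (v : T) : nat :=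
  #|[set U : {set T} | is_faceb p U && sinkb o U v]|.

End Orientation.

(* Main.v *)
Require Import Defs.
From HB Require Import structures.
From mathcomp Require Import all_boot all_order all_algebra.
From mathcomp Require Import boolp.
From mathcomp Require Import lra zify.
Set Implicit Arguments. Unset Strict Implicit. Unset Printing Implicit Defensive.
Import Order.TTheory GRing.Theory Num.Theory.
Local Open Scope ring_scope.

Lemma dotpD (R : realFieldType) n (c1 c2 x : 'rV[R]_n) (l : R) :
  dotp (c1 + l *: c2) x = dotp c1 x + l * dotp c2 x.
Proof.
rewrite /dotp mulr_sumr -big_split /=; apply: eq_bigr => i _.
by rewrite !mxE mulrDl mulrA.
Qed.

Lemma dotpN (R : realFieldType) n (c x : 'rV[R]_n) : dotp (- c) x = - dotp c x.
Proof.
rewrite /dotp -sumrN; apply: eq_bigr => i _; by rewrite !mxE mulNr.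
Qed.

Lemma dotp0 (R : realFieldType) n (x : 'rV[R]_n) : dotp 0 x = 0.
Proof. rewrite /dotp big1 // => i _; by rewrite mxE mul0r. Qed.

Definition expo (R : realFieldType) n (T : finType) (p : T -> 'rV[R]_n) (S U : {set T}) : Prop :=
  U \subset S /\ exists (c : 'rV[R]_n) (b : R),
    (forall t, t \in S -> dotp c (p t) <= b) /\ (forall t, t \in S -> (t \in U) = (dotp c (p t) == b)).

Lemma exists_lambda (R : realFieldType) (I : finType) (A : {set I}) (x y : I -> R) :
  (forall i, i \in A -> 0 < y i) -> exists l, 0 <= l /\ forall i, i \in A -> x i < l * y i.
Proof.
move=> hy; exists (\sum_(i in A) `|x i| / y i + 1); split.
  by apply: addr_ge0 => //; apply: sumr_ge0 => i /hy yi; rewrite divr_ge0 // ltW.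
move=> i iA; have yi := hy i iA.
rewrite -ltr_pdivrMr //.
apply: (le_lt_trans (y := `|x i| / y i)); first by rewrite ler_pM2r ?invr_gt0 // ler_norm.
rewrite (bigD1 i) //= -addrA ltrDl; apply: ltr_wpDl => //.
by apply: sumr_ge0 => j /andP[/hy yj _]; rewrite divr_ge0 // ltW.
Qed.

Lemma expo_trans (R : realFieldType) n (T : finType) (p : T -> 'rV[R]_n) (S F U : {set T}) :
  expo p S F -> expo p F U -> expo p S U.
Proof.
move=> [sFS [c1 [b1 [h1 e1]]]] [sUF [c2 [b2 [h2 e2]]]].
have hy : forall t, t \in S :\: F -> 0 < b1 - dotp c1 (p t).
  move=> t /setDP [tS tF]; rewrite subr_gt0 lt_neqAle h1 // andbT -e1 //.
have [l [l0 hl]] := @exists_lambda R T (S :\: F) (fun t => dotp c2 (p t) - b2) _ hy.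
split; first exact: subset_trans sUF sFS.
exists (c2 + l *: c1), (b2 + l * b1); split => t tS; rewrite dotpD.
  case: (boolP (t \in F)) => tF.
    by have := e1 t tS; rewrite tF => /esym/eqP ->; rewrite lerD2r h2.
  have := hl t; rewrite inE tF tS => /(_ isT) /ltW.
  have := h1 t tS; nra.
case: (boolP (t \in F)) => tF.
  by have := e1 t tS; rewrite tF => /esym/eqP ->; rewrite (e2 t tF); apply/eqP/eqP => ?; lra.
have tU : t \notin U by apply/negP => /(subsetP sUF); apply/negP.
rewrite (negbTE tU); apply/esym/negbTE; rewrite neq_lt; apply/orP; left.
have := hl t; rewrite inE tF tS => /(_ isT).
nra.
Qed.
Lemma exists_max (R : realFieldType) (I : finType) (A : {set I}) (f : I -> R) i0 :
  i0 \in A -> exists2 u, u \in A & forall x, x \in A -> f x <= f u.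
Proof.
move=> i0A; case: (@arg_maxP _ R I i0 (fun i => i \in A) f i0A) => u uA hu.
by exists u.
Qed.

Lemma ratio_trick (R : realFieldType) n (T : finType) (p : T -> 'rV[R]_n)
  (S : {set T}) v (a c : 'rV[R]_n) w :
  v \in S -> (forall x, x \in S -> x != v -> dotp a (p x) < dotp a (p v)) ->
  w \in S -> dotp c (p v) < dotp c (p w) ->
  exists F1, exists r, [/\ expo p S F1, v \in F1, exists2 u, u \in F1 & u != v, 0 < r &
   forall x, x \in F1 -> dotp c (p x) + r * dotp a (p x) = dotp c (p v) + r * dotp a (p v)].
Proof.
move=> vS ha wS hw.
have wv : w != v by apply/eqP => ewv; move: hw; rewrite ewv ltxx.
pose rr x := (dotp c (p x) - dotp c (p v)) / (dotp a (p v) - dotp a (p x)).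
have wA : w \in S :\ v by rewrite !inE wv.
have [u uA hu] := exists_max rr wA.
move: (uA); rewrite !inE => /andP[uv uS].
set r := rr u.
have Dpos : forall x, x \in S -> x != v -> 0 < dotp a (p v) - dotp a (p x).
  by move=> x xS xv; rewrite subr_gt0 ha.
have rw : 0 < rr w by rewrite /rr divr_gt0 ?Dpos // subr_gt0.
have r0 : 0 < r by apply: lt_le_trans rw (hu w wA).
have key : forall x, x \in S -> x != v ->
   dotp c (p x) + r * dotp a (p x) - (dotp c (p v) + r * dotp a (p v))
   = (dotp a (p v) - dotp a (p x)) * (rr x - r).
  move=> x xS xv; have Dx := Dpos x xS xv.
  rewrite /rr mulrBr mulrCA mulfV ?gt_eqF // mulr1; lra.
pose phi := c + r *: a.
exists [set x in S | dotp phi (p x) == dotp phi (p v)], r; split => //.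
- split; first by apply/subsetP => x; rewrite inE => /andP[].
  exists phi, (dotp phi (p v)); split => x xS; last by rewrite inE xS.
  rewrite !dotpD; case: (eqVneq x v) => [-> //|xv].
  rewrite -subr_le0 key // pmulr_rle0 ?Dpos // subr_le0.
  by apply: hu; rewrite !inE xv.
- by rewrite inE vS eqxx.
- exists u => //.
  by rewrite inE uS /= !dotpD -subr_eq0 key // /r subrr mulr0 eqxx.
- move=> x; rewrite inE => /andP[xS].
  by rewrite !dotpD => /eqP.
Qed.

Lemma vert_sep (R : realFieldType) n (T : finType) (p : T -> 'rV[R]_n)
  (hvert : forall t : T, is_face p [set t]) t :
  exists a, forall x, x != t -> dotp a (p x) < dotp a (p t).
Proof.
have [c [b [h e]]] := hvert t; exists c => x xt.
have -> : dotp c (p t) = b by apply/eqP; rewrite -e set11.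
by rewrite lt_neqAle h andbT -e inE.
Qed.

Lemma expo_self (R : realFieldType) n (T : finType) (p : T -> 'rV[R]_n) (S : {set T}) :
  expo p S S.
Proof.
split => //; exists 0, 0; split => t tS; rewrite dotp0 ?lexx ?eqxx // tS.
Qed.

Lemma expo_sub (R : realFieldType) n (T : finType) (p : T -> 'rV[R]_n) (S U : {set T}) :
  expo p S U -> U \subset S.
Proof. by case. Qed.

Lemma edge_exists (R : realFieldType) n (T : finType) (p : T -> 'rV[R]_n)
  (hvert : forall t : T, is_face p [set t]) k :
  forall (S : {set T}) v, (#|S| <= k)%N -> v \in S -> (1 < #|S|)%N ->
  exists2 u, u != v & expo p S [set v; u].
Proof.
elim: k => [|k IH] S v hk vS h2; first by move: h2; rewrite leqNgt (leq_ltn_trans hk).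
have [x xSv] : exists x, x \in S :\ v.
  by apply/set0Pn; rewrite -card_gt0 (cardsD1 v S) vS in h2 *.
move: (xSv); rewrite !inE => /andP[xv xS].
have sub2 : [set v; x] \subset S by apply/subsetP => z; rewrite !inE => /orP[]/eqP->.
have c2 : #|[set v; x]| = 2%N by rewrite cards2 eq_sym xv.
case: (eqVneq #|S| 2) => [e2|n2].
  exists x => //.
  have -> : S = [set v; x].
    by apply/esym/eqP; rewrite eqEcard sub2 c2 e2 /=.
  exact: expo_self.
have [y ySvx] : exists y, y \in S :\ v :\ x.
  apply/set0Pn; rewrite -card_gt0.
  have := cardsD1 v S; have := cardsD1 x (S :\ v); rewrite vS xSv.
  move: h2 n2; lia.
move: (ySvx); rewrite !inE => /and3P[yx yv yS].
have [a ha] := vert_sep hvert v.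
have [u1 [u1S u1v [z [zS zu le]]]] : exists u1, [/\ u1 \in S, u1 != v &
    exists z, [/\ z \in S, z != u1 & dotp a (p z) <= dotp a (p u1)]].
  case: (boolP [forall z in S, (z != x) ==> (dotp a (p x) < dotp a (p z))]) => hx.
    exists y; split => //; exists x; split => //; first by rewrite eq_sym.
    by move/forallP: hx => /(_ y); rewrite yS yx /= => /ltW.
  exists x; split => //.
  move/forallPn: hx => [z]; rewrite negb_imply => /andP[zS]; rewrite negb_imply.
  by case/andP => zx; rewrite -leNgt => hz; exists z.
have [a1 ha1] := vert_sep hvert u1.
have vu1 : v != u1 by rewrite eq_sym.
have [F1 [r [eF1 vF1 [u uF uv] r0 heq]]] :=
  ratio_trick (a := a) (c := a1) vS (fun x _ xv => ha x xv) u1S (ha1 v vu1).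
have sF1 := expo_sub eF1.
have nsub : ~~ (S \subset F1).
  apply/negP => /subsetP sSF.
  have e1 := heq z (sSF z zS); have e2 := heq u1 (sSF u1 u1S).
  have h1 := ha1 z zu.
  have h3 : 0 <= r * (dotp a (p u1) - dotp a (p z)) by apply: mulr_ge0; [exact: ltW | rewrite subr_ge0].
  move: e1 e2 h1 h3; rewrite mulrBr.
  move: (dotp a1 (p z)) (dotp a1 (p u1)) (dotp a1 (p v)) (r * dotp a (p z)) (r * dotp a (p u1)) (r * dotp a (p v)) => ??????; lra.
have pF1 : F1 \proper S by rewrite properE sF1.
have cF1 := proper_card pF1.
have c2F1 : (1 < #|F1|)%N.
  have s2 : [set v; u] \subset F1 by apply/subsetP => t; rewrite !inE => /orP[]/eqP->.
  by have := subset_leq_card s2; rewrite cards2 eq_sym uv.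
have hk' : (#|F1| <= k)%N by rewrite -ltnS (leq_trans cF1 hk).
have [u' u'v e'] := IH F1 v hk' vF1 c2F1.
exists u' => //; exact: expo_trans eF1 e'.
Qed.

Lemma local_global (R : realFieldType) n (T : finType) (p : T -> 'rV[R]_n)
  (hvert : forall t : T, is_face p [set t]) (S : {set T}) v (c : 'rV[R]_n) w :
  v \in S -> w \in S -> dotp c (p v) < dotp c (p w) ->
  exists u, [/\ u != v, expo p S [set v; u] & dotp c (p v) < dotp c (p u)].
Proof.
move=> vS wS hw.
have [a ha] := vert_sep hvert v.
have [F1 [r [eF1 vF1 [u uF uv] r0 heq]]] :=
  ratio_trick (a := a) (c := c) vS (fun x _ xv => ha x xv) wS hw.
have c2F1 : (1 < #|F1|)%N.
  have s2 : [set v; u] \subset F1 by apply/subsetP => t; rewrite !inE => /orP[]/eqP->.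
  by have := subset_leq_card s2; rewrite cards2 eq_sym uv.
have [u' u'v e'] := edge_exists hvert (leqnn #|F1|) vF1 c2F1.
exists u'; split => //; first exact: expo_trans eF1 e'.
have u'F : u' \in F1 by apply: (subsetP (expo_sub e')); rewrite !inE eqxx orbT.
have e1 := heq u' u'F; have h1 := ha u' u'v.
have h3 : 0 < r * (dotp a (p v) - dotp a (p u')) by rewrite mulr_gt0 // subr_gt0.
move: e1 h3; rewrite mulrBr.
move: (dotp c (p u')) (dotp c (p v)) (r * dotp a (p u')) (r * dotp a (p v)) => ????; lra.
Qed.

Lemma hrank2 (R : realFieldType) n (T : finType) (p : T -> 'rV[R]_n)
  (hinj : injective p) u v : u != v -> hrank p [set v; u] = 2%N.
Proof.
move=> uv.
pose h t := row_mx (p t) (const_mx 1 : 'rV[R]_1).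
pose M := \matrix_(i < #|T|) (if enum_val i \in [set v; u] then h (enum_val i) else 0).
have hrow : forall t, t \in [set v; u] -> row (enum_rank t) M = h t.
  by move=> t ht; rewrite /M rowK enum_rankK ht.
have eqM : (M == col_mx (h v) (h u))%MS.
  apply/andP; split.
    apply/row_subP => i; rewrite rowK; case: ifP => [|_]; last exact: sub0mx.
    rewrite -addsmxE; case/set2P => ->; [exact: addsmxSl | exact: addsmxSr].
  rewrite -addsmxE addsmx_sub; apply/andP; split.
    by rewrite -(hrow v) ?row_sub // !inE eqxx.
  by rewrite -(hrow u) ?row_sub // !inE eqxx orbT.
change (\rank M = 2%N); rewrite (eqmx_rank eqM) -addsmxE.
have hv0 : h v != 0.
  apply/negP => /eqP /(congr1 (fun A : 'rV[R]_(n + 1) => A 0 (rshift n 0))).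
  by rewrite row_mxEr !mxE; apply/eqP; rewrite oner_eq0.
have rv : \rank (h v) = 1%N by rewrite rank_rV hv0.
apply/eqP; rewrite eqn_leq.
have -> /= : (\rank (h v + h u)%MS <= 2)%N.
  by have := rank_leq_row (col_mx (h v) (h u)); rewrite -addsmxE.
have le := mxrank_leqif_sup (addsmxSl (h v) (h u)).
rewrite ltnNge; apply/negP => hle.
have : (\rank (h v) == \rank (h v + h u)%MS) by rewrite eqn_leq le.1 rv.
rewrite le.2 addsmx_sub => /andP[_] /sub_rVP [k].
rewrite /h scale_row_mx => /eq_row_mx [e1 e2].
have k1 : k = 1.
  move: e2 => /(congr1 (fun A : 'rV[R]_1 => A 0 0)); rewrite !mxE mulr1 => ->//.
move: e1; rewrite k1 scale1r => /hinj /eqP; apply/negP; exact: uv.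
Qed.

Lemma face_expo (R : realFieldType) n (T : finType) (p : T -> 'rV[R]_n) U :
  is_face p U -> expo p setT U.
Proof.
move=> [c [b [h e]]]; split; first exact: subsetT.
by exists c, b; split => t _; [exact: h | exact: e].
Qed.

Lemma expo_face (R : realFieldType) n (T : finType) (p : T -> 'rV[R]_n) U :
  expo p setT U -> is_face p U.
Proof.
move=> [_ [c [b [h e]]]]; exists c, b; split => t; [exact: h | exact: e].
Qed.

Lemma edge_adj (R : realFieldType) n (T : finType) (p : T -> 'rV[R]_n)
  (hinj : injective p) u v : u != v -> is_face p [set v; u] -> adj p u v.
Proof.
move=> uv hf; rewrite /adj uv /=; apply/asboolP.
exists [set v; u]; split => //; last by rewrite !inE eqxx.
  by rewrite /face_dim hrank2.
by rewrite !inE eqxx orbT.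
Qed.

Lemma sink_sub (R : realFieldType) n (T : finType) (p : T -> 'rV[R]_n) (o : rel T)
  (hinj : injective p) (hvert : forall t : T, is_face p [set t]) v (U U' : {set T}) :
  is_face p U -> sinkb p o U v -> is_face p U' -> sinkb p o U' v ->
  U :&: [set u | o u v] \subset U' :&: [set u | o u v] -> U \subset U'.
Proof.
move=> fU sU fU' sU' hsub; apply/subsetP => z zU.
case: (boolP (z \in U')) => // zU'; exfalso.
have [c' [b' [h' e']]] := fU'.
have vU : v \in U by case/andP: sU.
have vU' : v \in U' by case/andP: sU'.
have cv : dotp c' (p v) = b' by apply/eqP; rewrite -e'.
have cz : dotp c' (p z) < b' by rewrite lt_neqAle h' andbT -e'.
have hlt : dotp (- c') (p v) < dotp (- c') (p z) by rewrite !dotpN ltrN2 cv.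
have [u [uv eu hu]] := local_global hvert vU zU hlt.
have fe : is_face p [set v; u] := expo_face (expo_trans (face_expo fU) eu).
have ad := edge_adj hinj uv fe.
have uU : u \in U by apply: (subsetP (expo_sub eu)); rewrite !inE eqxx orbT.
have ouv : o u v by case/andP: sU => _ /forallP /(_ u); rewrite uU ad.
have : u \in U' :&: [set u | o u v] by apply: (subsetP hsub); rewrite !inE uU ouv.
rewrite !inE e' => /andP[/eqP cu _].
by move: hu; rewrite !dotpN cv cu ltxx.
Qed.

Lemma sink_count_le (R : realFieldType) n (T : finType) (p : T -> 'rV[R]_n) (o : rel T)
  (hinj : injective p) (hvert : forall t : T, is_face p [set t]) v :
  (sink_count p o v <= 2 ^ indeg o v)%N.
Proof.
rewrite /sink_count /indeg.
set A := [set U : {set T} | _].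
pose phi (U : {set T}) := U :&: [set u | o u v].
have inj : {in A &, injective phi}.
  move=> U U'; rewrite !inE => /andP[/asboolP fU sU] /andP[/asboolP fU' sU'] e.
  apply/eqP; rewrite eqEsubset.
  apply/andP; split.
    by apply: (sink_sub hinj hvert fU sU fU' sU'); rewrite /phi in e; rewrite e.
  by apply: (sink_sub hinj hvert fU' sU' fU sU); rewrite /phi in e; rewrite e.
rewrite -(card_in_imset inj) -card_powerset subset_leq_card //.
apply/subsetP => X /imsetP [U _ ->]; rewrite inE; exact: subsetIr.
Qed.

Lemma card_sum (I : finType) (P : pred I) : #|[set x | P x]| = (\sum_x (P x : nat))%N.
Proof.
rewrite -sum1_card big_mkcond /=; apply: eq_bigr => x _; rewrite inE; by case: (P x).
Qed.

Lemma sum_eq_le1 k (x : nat) : (\sum_(i < k) ((x == nat_of_ord i) : nat) <= 1)%N.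
Proof.
case: (ltnP x k) => xk.
  rewrite (bigD1 (Ordinal xk)) //= eqxx big1 // => j /negbTE jn.
  by case: eqP => // e; move: jn; rewrite -val_eqE /= -e eqxx.
rewrite big1 // => j _; case: eqP => // e; move: xk; rewrite e leqNgt ltn_ord //.
Qed.

Lemma sink_exists (R : realFieldType) n (T : finType) (p : T -> 'rV[R]_n) (o : rel T)
  (hor : orientation p o) (hacyc : acyclic_or o) (U : {set T}) :
  U != set0 -> exists v, sinkb p o U v.
Proof.
case/set0Pn => v0 v0U.
pose reach x := #|[set y | connect o x y]|.
have ex : exists m, [exists x in U, reach x == m] by exists (reach v0); apply/existsP; exists v0; rewrite v0U eqxx.
case: (ex_minnP ex) => m /existsP [v /andP[vU /eqP rv]] hmin.
exists v; rewrite /sinkb vU /=; apply/forallP => u; apply/implyP => /andP[uU ad].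
have := hor.2 u v ad.
case ovu : (o v u); last by rewrite addbF.
exfalso.
have sub : [set y | connect o u y] \proper [set y | connect o v y].
  rewrite properE; apply/andP; split.
    apply/subsetP => y; rewrite !inE => cuy; apply: connect_trans cuy.
    exact: connect1.
  apply/subsetPn; exists v; first by rewrite inE connect0.
  by rewrite inE; apply: hacyc.
have := proper_card sub; rewrite -/(reach u) -/(reach v) rv.
have := hmin (reach u); rewrite leqNgt => h; apply/negP; apply: h.
by apply/existsP; exists u; rewrite uU eqxx.
Qed.

Theorem lemma2p10 (R : realFieldType) (n d : nat) (T : finType)
  (p : T -> 'rV[R]_n) (o : rel T)
  (hinj : injective p)
  (hvert : forall t : T, is_face p [set t])
  (hdim : hrank p [set: T] = d.+1)
  (hor : orientation p o) (hacyc : acyclic_or o) :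
  (\sum_(v : T) sink_count p o v <= fO o)%N /\
  (\sum_(i < d.+1) f_num p i <= \sum_(v : T) sink_count p o v)%N.
Proof.
split.
  by apply: leq_sum => v _; exact: sink_count_le.
apply: (@leq_trans (\sum_(U : {set T}) ((is_faceb p U && (U != set0)) : nat))).
  rewrite /f_num.
  under eq_bigr => i _ do rewrite card_sum.
  rewrite exchange_big /=; apply: leq_sum => U _.
  case: (boolP (is_faceb p U && (U != set0))) => hQ.
    apply: leq_trans (sum_eq_le1 d.+1 (face_dim p U)).
    apply: leq_sum => i _; move: hQ => /andP[-> ->] /=; by [].
  rewrite big1 // => i _; move: hQ; case: (is_faceb p U) => //=; case: (U != set0) => //.
rewrite /sink_count.
under eq_bigr => v _ do rewrite card_sum.
rewrite exchange_big /=; apply: leq_sum => U _.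
case: (boolP (is_faceb p U && (U != set0))) => // /andP[fU nU].
have [v sv] := sink_exists hor hacyc nU.
by rewrite (bigD1 v) //= fU sv.
Qed.
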